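(* Let $a,b$ be integers and let $G\in\mathscr{G}_{a,b}$ be a tricyclic graph with at least one pendant vertex. Suppose $C_p=vu_1\ldots u_{p-1}v$ is an internal cycle of the base $\widetilde G$ with $N_{\widetilde G}(v)=\{u_1,u_{p-1},w_1,w_2\}$. Then $d_G(v)=4$, $p=3$ and $G\in\mathscr{G}_{7,-1}$. Moreover, $d_G(w_1)=d_G(w_2)=2$, and one of $u_1,u_{p-1}$ has degree $2$ in $G$ while the other has degree $a+b-1=5$ in $G$.
   Context: All graphs are simple and connected; $d_G(v)$ is the degree of $v$, $N_G(v)$ its neighbourhood. A tricyclic graph is a connected graph with $|E_G|=|V_G|+2$. For integers $a,b$, $\mathscr{G}_{a,b}$ is the set of connected graphs $G$ such that for every $v\in V_G$, $\sum_{u\in N_G(v)}d_G(u)=a\,d_G(v)+b-d_G(v)^2$. A pendant vertex is a vertex of degree $1$. The base $\widetilde{G}$ of $G$ is the subgraph obtained from $G$ by repeatedly deleting pendant vertices until none remain. An internal cycle of $\widetilde G$ is a cycle $u_0u_1\ldots u_k$ with $u_0=u_k$, $k\ge 3$, $d_{\widetilde G}(u_0)\ge 3$ and $d_{\widetilde G}(u_i)=2$ for $1\le i\le k-1$. *)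

(* Defs.v *)
From mathcomp Require Import all_boot all_order all_algebra.
Set Implicit Arguments. Unset Strict Implicit. Unset Printing Implicit Defensive.
Import GRing.Theory Num.Theory.

Section Graphs.
Variables (T : finType) (e : rel T).

Definition simple_graph := symmetric e /\ irreflexive e.
Definition connected_graph := forall x y : T, connect e x y.

Definition nbhd (v : T) : {set T} := [set u | e v u].
Definition deg (v : T) : nat := #|nbhd v|.

Definition edges : {set {set T}} :=
  [set E : {set T} | [exists u, exists w, (E == [set u; w]) && e u w]].

Definition tricyclic := #|edges| = (#|T| + 2)%N.

Definition pendant (v : T) := deg v = 1%N.

Definition in_Gab (a b : int) :=
  forall v : T, (Posz (\sum_(u in nbhd v) deg u)%N
                = a * Posz (deg v) + b - (Posz (deg v)) ^+ 2)%R.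

Definition nbhd_in (S : {set T}) (v : T) : {set T} := [set u in S | e v u].
Definition deg_in (S : {set T}) (v : T) : nat := #|nbhd_in S v|.

Definition prune (S : {set T}) : {set T} := [set x in S | deg_in S x != 1%N].

(* the base: repeatedly delete pendant vertices; #|T| rounds suffice to reach
   the fixpoint since every non-final round removes at least one vertex *)
Definition base : {set T} := iter #|T| prune [set: T].

(* internal cycle v u_1 ... u_{p-1} v of the base, with us = [:: u_1; ...; u_{p-1}],
   so p = size us + 1 *)
Definition internal_cycle (v : T) (us : seq T) :=
  [/\ (2 <= size us)%N /\ uniq (v :: us),
      path e v us /\ e (last v us) v,
      all (fun x => x \in base) (v :: us),
      (3 <= deg_in base v)%N &
      forall u, u \in us -> deg_in base u = 2%N].

End Graphs.

(* Main.v *)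
Require Import Defs.
From mathcomp Require Import all_boot all_order all_algebra.
From mathcomp Require Import zify ring lra.
Import GRing.Theory Num.Theory.
Set Implicit Arguments. Unset Strict Implicit. Unset Printing Implicit Defensive.

Section Prune.
Variables (T : finType) (e : rel T).

Definition Sj (j : nat) : {set T} := iter j (prune e) setT.

Lemma prune_sub (X : {set T}) : prune e X \subset X.
Proof. by apply/subsetP => x; rewrite inE => /andP[]. Qed.

Lemma Sj_S j : Sj j.+1 \subset Sj j.
Proof. by rewrite /Sj iterS prune_sub. Qed.

Lemma Sj_mono i j : (i <= j)%N -> Sj j \subset Sj i.
Proof.
move=> /subnK <-; elim: (j - i)%N => [|n IH] //=.
by rewrite ?addSn; apply: subset_trans (Sj_S _) IH.
Qed.

Lemma Sj_stab_ex : exists j, (j <= #|T|)%N /\ Sj j.+1 = Sj j.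
Proof.
case: (boolP [exists j : 'I_#|T|.+1, Sj j.+1 == Sj j]).
  by case/existsP => j /eqP E; exists j; split => //; rewrite -ltnS.
rewrite negb_exists => /forallP H.
have key : forall j, (j <= #|T|.+1)%N -> (#|Sj j| + j <= #|T|)%N.
  elim=> [|j IH] hj; first by rewrite addn0 /Sj /= cardsT.
  have hj' : (j < #|T|.+1)%N by [].
  have := H (Ordinal hj'); rewrite /= => hne.
  have hlt : (#|Sj j.+1| < #|Sj j|)%N.
    by apply: proper_card; rewrite properEneq hne Sj_S.
  apply: leq_trans (IH (ltnW hj)); by rewrite addnS -addSn leq_add2r.
have := key _ (leqnn _); lia.
Qed.

Lemma Sj_stab_after j i : Sj j.+1 = Sj j -> Sj (i + j) = Sj j.
Proof.
move=> E; elim: i => [|i IH] //.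
change (prune e (Sj (i + j)) = Sj j); rewrite IH; exact: E.
Qed.

Lemma base_Sj : base e = Sj #|T|.
Proof. by []. Qed.

Lemma prune_base : prune e (base e) = base e.
Proof.
have [j [hj E]] := Sj_stab_ex.
rewrite base_Sj -iterS -/(Sj #|T|.+1).
rewrite -(subnK hj) -addSn !Sj_stab_after //.
Qed.

Lemma base_deg_in x : x \in base e -> deg_in e (base e) x != 1%N.
Proof. by rewrite -{1}prune_base inE => /andP[]. Qed.

Lemma Sj_removed x j : x \notin Sj j -> exists i, [/\ (i < j)%N, x \in Sj i & x \notin Sj i.+1].
Proof.
elim: j => [|j IH]; first by rewrite /Sj /= inE.
case: (boolP (x \in Sj j)) => hx hn; first by exists j.
by have [i [h1 h2 h3]] := IH hx; exists i; split => //; apply: ltnW.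
Qed.

Lemma Sj_removed_deg x i : x \in Sj i -> x \notin Sj i.+1 -> deg_in e (Sj i) x = 1%N.
Proof.
by rewrite /Sj iterS -/(Sj i) inE => -> /=; rewrite negbK => /eqP.
Qed.

Lemma Sj_base_sub j : (j <= #|T|)%N -> base e \subset Sj j.
Proof. by move=> h; rewrite base_Sj Sj_mono. Qed.
End Prune.

Section Graph.
Variables (T : finType) (e : rel T) (a b : int).
Hypothesis esym : symmetric e.
Hypothesis HG : in_Gab e a b.

Definition fv (d : int) : int := (a * d + b - d ^+ 2)%R.
Definition kk : int := (a + b - 1)%R.

Lemma deg_gt0 u w : e u w -> (0 < deg e u)%N.
Proof. by move=> h; apply/card_gt0P; exists w; rewrite inE. Qed.

Lemma nbhd_deg_gt0 u w : w \in nbhd e u -> (0 < deg e w)%N.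
Proof. by rewrite inE esym => /deg_gt0. Qed.

Lemma sumdeg u : Posz (\sum_(w in nbhd e u) deg e w)%N = fv (deg e u).
Proof. exact: HG. Qed.

Lemma leaf_nbr x y : deg e x = 1%N -> e x y -> Posz (deg e y) = kk.
Proof.
move=> hx hxy; have /cards1P [z hz] : #|nbhd e x| == 1%N by apply/eqP.
have yz : y = z by apply/set1P; rewrite -hz inE.
have := sumdeg x; rewrite hz big_set1 -yz hx /fv /kk => ->.
by rewrite mulr1 expr1n.
Qed.

Lemma nbhd_in_setT x : nbhd_in e setT x = nbhd e x.
Proof. by apply/setP => y; rewrite !inE. Qed.

Lemma leaf_not_S1 x : deg e x = 1%N -> x \notin Sj e 1.
Proof.
move=> h; rewrite /Sj /= inE in_setT /= /deg_in nbhd_in_setT -/(deg e x) h.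
by [].
Qed.

Lemma deg_in_le S x : (deg_in e S x <= deg e x)%N.
Proof. by apply: subset_leq_card; apply/subsetP => y; rewrite !inE => /andP[]. Qed.

Lemma sum_two (A : {set T}) (h : T -> nat) c p :
  c \in A -> p \in A -> c != p -> (h c + h p <= \sum_(u in A) h u)%N.
Proof.
move=> hc hp cp; rewrite (big_setD1 c) //= (big_setD1 p) /=; last first.
  by rewrite !inE eq_sym cp.
by rewrite addnA leq_addr.
Qed.

Lemma sum_deg_split (A : {set T}) : (forall u, u \in A -> 0 < deg e u)%N ->
  (\sum_(u in A) deg e u = #|A| + \sum_(u in A) (deg e u).-1)%N.
Proof.
move=> h; rewrite -sum1_card -big_split /=; apply: eq_bigr => u hu.
by rewrite add1n prednK // h.
Qed.

Lemma prod_consec_ge0 (x : int) : (0 <= x * (x + 1))%R.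
Proof. nia. Qed.

Lemma key_ident : let q := (fv kk - (kk - 1))%R in
  (fv q - q - (kk - 1) = - ((b * (b + 1)) * ((kk - 2) * (kk - 2 + 1))))%R.
Proof. by rewrite /fv /kk /=; ring. Qed.

Lemma sumcontra r c p : e r c -> e r p -> c != p -> Posz (deg e c) = kk ->
  Posz (deg e r) = (fv kk - (kk - 1))%R -> (2 <= deg e p)%N -> False.
Proof.
move=> hc hp cp dc dr dp.
have hs := sumdeg r.
rewrite sum_deg_split in hs; last by move=> u; apply: nbhd_deg_gt0.
have h2 := @sum_two (nbhd e r) (fun u => (deg e u).-1) c p.
rewrite !inE in h2; have {h2}h2 := h2 hc hp cp.
have hk := key_ident; rewrite /= -dr in hk.
have := prod_consec_ge0 b; have := prod_consec_ge0 (kk - 2).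
move: hs h2 hk dc dr dp; rewrite -/(deg e r).
set S := (\sum_(u in _) _)%N; set q := deg e r; set dcn := deg e c; set dpn := deg e p.
move=> hs h2 hk dc dr dp g1 g2.
have g3 := mulr_ge0 g1 g2.
have dc1 : (0 < dcn)%N by apply: (@deg_gt0 c r); rewrite esym.

lia.
Qed.

Lemma deg_in1_uniq S x u w : deg_in e S x = 1%N -> u \in S -> e x u ->
  w \in S -> e x w -> u = w.
Proof.
move=> h1 uS xu wS xw; have /cards1P [z hz] : #|nbhd_in e S x| == 1%N by apply/eqP.
have hu : u \in nbhd_in e S x by rewrite !inE uS xu.
have hw : w \in nbhd_in e S x by rewrite !inE wS xw.
by rewrite hz !inE in hu hw; rewrite (eqP hu) (eqP hw).
Qed.

Lemma deg_in1_ex S x : deg_in e S x = 1%N -> exists p, p \in S /\ e x p.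
Proof.
move=> h1; have /card_gt0P [p hp] : (0 < #|nbhd_in e S x|)%N by rewrite -/(deg_in e S x) h1.
by exists p; rewrite !inE in hp; case/andP: hp.
Qed.

Lemma star_center x y : e x y -> (forall u, e x u -> u != y -> deg e u = 1%N) ->
  deg e x != 1%N -> Posz (deg e x) = kk /\ Posz (deg e y) = (fv kk - (kk - 1))%R.
Proof.
move=> xy hl hx.
have dx0 := deg_gt0 xy.
have yin : y \in nbhd e x by rewrite inE.
have hc := cardsD1 y (nbhd e x); rewrite yin -/(deg e x) in hc.
have [u hu] : exists u, u \in nbhd e x :\ y.
  by apply/card_gt0P; move: hx dx0; rewrite hc add1n /=; case: #|_|.
move: (hu); rewrite !inE => /andP [uy xu].
have ux : e u x by rewrite esym.
have dk := leaf_nbr (hl u xu uy) ux.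
split => //.
have hs := sumdeg x.
rewrite (big_setD1 y yin) /= in hs.
rewrite (eq_bigr (fun=> 1%N)) in hs; last first.
  by move=> w; rewrite !inE => /andP[wy xw]; apply: hl.
rewrite sum1_card in hs.
rewrite -dk; move: hs hc.
set D := deg e x; set Y := deg e y; set C := #|_|.
move=> hs hc; lia.
Qed.

Lemma tree_leaf j : forall t, t \in Sj e j -> t \notin Sj e j.+1 ->
  forall c, e t c -> c \notin Sj e j -> deg e c = 1%N.
Proof.
elim/ltn_ind: j => j IH t tj tn c tc cn.
have [i [ij ci cn']] := Sj_removed cn.
apply/eqP; apply: contraT => hc.
have ti : t \in Sj e i by apply: (subsetP (Sj_mono e (ltnW ij))).
have di := Sj_removed_deg ci cn'.
have ct : e c t by rewrite esym.
have leafs : forall u, e c u -> u != t -> deg e u = 1%N.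
  move=> u cu ut; apply: (IH i ij c ci cn' u cu).
  by apply: contra ut => uS; apply/eqP; apply: (deg_in1_uniq di uS cu ti ct).
have [dk dt] := star_center ct leafs hc.
have dj := Sj_removed_deg tj tn.
have [p [pS tp]] := deg_in1_ex dj.
have j1 : (1 <= j)%N by apply: leq_ltn_trans (leq0n i) ij.
have p1 : p \in Sj e 1 by apply: (subsetP (Sj_mono e j1)).
have dp1 : deg e p != 1%N by apply: contraL p1 => /eqP; apply: leaf_not_S1.
have dp0 : (0 < deg e p)%N by apply: (@deg_gt0 p t); rewrite esym.
have dp2 : (2 <= deg e p)%N by move: dp1 dp0; case: (deg e p) => [|[|]].
have cp : c != p by apply: contraNneq cn => ->.
by case: (sumcontra tc tp cp dk dt dp2).
Qed.

Lemma deg2_base s r : s \in base e -> r \in base e -> e s r -> (2 <= deg e s)%N.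
Proof.
move=> sb rb sr.
have h1 : (0 < deg_in e (base e) s)%N by apply/card_gt0P; exists r; rewrite !inE rb sr.
have h2 := base_deg_in sb.
apply: leq_trans (deg_in_le (base e) s).
by move: h1 h2; case: (deg_in _ _ _) => [|[|]].
Qed.

Lemma base_nbr_leaf r s t : r \in base e -> s \in base e -> e r s -> e r t ->
  t \notin base e -> deg e t = 1%N.
Proof.
move=> rb sb rs rt tb.
have [i [iN ti tn]] := Sj_removed (tb : t \notin Sj e #|T|).
have ri : r \in Sj e i by apply: (subsetP (Sj_base_sub e (ltnW iN))).
have di := Sj_removed_deg ti tn.
have tr : e t r by rewrite esym.
have leafs : forall u, e t u -> u != r -> deg e u = 1%N.
  move=> u tu ur; apply: (tree_leaf ti tn tu).
  by apply: contra ur => uS; apply/eqP; apply: (deg_in1_uniq di uS tu ri tr).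
apply/eqP; apply: contraT => ht.
have [dk dr] := star_center tr leafs ht.
have sr : e s r by rewrite esym.
have ds := deg2_base sb rb sr.
have ts : t != s by apply: contraNneq tb => ->.
by case: (sumcontra rt rs ts dk dr ds).
Qed.

Lemma base_vertex r s : r \in base e -> s \in base e -> e r s ->
  [/\ (#|nbhd_in e (base e) r| <= deg e r)%N,
      (\sum_(u in nbhd e r) deg e u = \sum_(u in nbhd_in e (base e) r) deg e u
           + (deg e r - #|nbhd_in e (base e) r|))%N &
      deg e r = #|nbhd_in e (base e) r| \/ Posz (deg e r) = kk].
Proof.
move=> rb sb rs.
have EB : nbhd e r :&: base e = nbhd_in e (base e) r.
  by apply/setP => u; rewrite !inE andbC.
have hc := cardsID (base e) (nbhd e r); rewrite EB -/(deg e r) in hc.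
have lf : forall u, u \in nbhd e r :\: base e -> deg e u = 1%N.
  by move=> u; rewrite !inE => /andP[ub ru]; apply: (base_nbr_leaf rb sb rs ru ub).
split.
- by rewrite -hc leq_addr.
- rewrite (big_setID (base e)) /= EB (eq_bigr (fun=> 1%N) lf) sum1_card.
  by rewrite -hc addKn.
- case: (boolP (#|nbhd e r :\: base e| == 0%N)) => h0.
    by left; rewrite -hc (eqP h0) addn0.
  right; have /card_gt0P [t ht] : (0 < #|nbhd e r :\: base e|)%N by rewrite lt0n.
  have := lf t ht; move: ht; rewrite !inE => /andP[_ rt] dt.
  by apply: leaf_nbr dt _; rewrite esym.
Qed.
End Graph.

Section Glob.
Variables (T : finType) (e : rel T) (a b : int).
Hypothesis esym : symmetric e.
Hypothesis HG : in_Gab e a b.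

Lemma path_exit p : forall y, y \in base e -> (0 < deg_in e (base e) y)%N ->
  path e y p -> last y p \notin base e ->
  exists y' z, [/\ y' \in base e, (0 < deg_in e (base e) y')%N, e y' z & z \notin base e].
Proof.
elim: p => [|z p IH] y yb yd /=; first by rewrite yb.
case/andP => yz pz hl.
case: (boolP (z \in base e)) => zb; last by exists y, z.
apply: (IH z zb _ pz hl).
by apply/card_gt0P; exists y; rewrite !inE yb esym.
Qed.

Lemma nbhd_in_sub r : nbhd_in e (base e) r \subset nbhd e r.
Proof. by apply/subsetP => u; rewrite !inE => /andP[]. Qed.

Lemma global_bk y z : y \in base e -> (0 < deg_in e (base e) y)%N -> e y z ->
  z \notin base e -> (3 <= kk a b)%R /\ (b <= -1)%R.
Proof.
move=> yb yd yz zb.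
have /card_gt0P [s sB] := yd; move: (sB); rewrite !inE => /andP[sb ys].
have [hle hsum hcase] := base_vertex esym HG yb sb ys.
have dz := base_nbr_leaf esym HG yb sb ys yz zb.
have zy : e z y by rewrite esym.
have dy := leaf_nbr HG dz zy.
have bd2 := base_deg_in yb.
set B := nbhd_in e (base e) y in hle hsum bd2.
have hB : (2 * #|B| <= \sum_(u in B) deg e u)%N.
  rewrite mulnC -sum_nat_const; apply: leq_sum => u; rewrite !inE => /andP[ub yu].
  by apply: (deg2_base ub yb); rewrite esym.
have hlt : (#|B| < deg e y)%N.
  have sub : B \subset nbhd e y :\ z.
    apply/subsetP => u; rewrite !inE => /andP[ub yu]; rewrite yu andbT.
    by apply: contraNneq zb => <-.
  have := subset_leq_card sub; rewrite /deg (cardsD1 z (nbhd e y)) inE yz.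
  by rewrite add1n ltnS.
have hs := sumdeg HG y; rewrite hsum in hs.
have idf : (fv a b (kk a b) - kk a b = - (b * (kk a b - 1)))%R by rewrite /fv /kk; ring.
rewrite dy in hs.
move: hB hlt hs bd2 yd dy idf.
rewrite /deg_in -/B.
set SB := (\sum_(u in B) _)%N; set n := #|B|; set D := deg e y; set K := kk a b.
move=> hB hlt hs bd2 yd dy idf.
have bd2' : (2 <= n)%N by lia.
have hX : (2 <= - (b * (K - 1)))%R by lia.
split; first by lia.
case: (lerP b (-1)) => // hb.
have : (0 <= b * (K - 1))%R by apply: mulr_ge0; lia.
lia.
Qed.

Lemma window x0 x1 x2 : x0 \in base e -> x1 \in base e -> x2 \in base e ->
  e x1 x0 -> e x1 x2 -> x0 != x2 -> deg_in e (base e) x1 = 2%N ->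
  (Posz (deg e x1) = 2 \/ Posz (deg e x1) = kk a b) /\
  (Posz (deg e x0) + Posz (deg e x2) + (Posz (deg e x1) - 2) = fv a b (Posz (deg e x1)))%R.
Proof.
move=> b0 b1 b2 e10 e12 n02 d2.
have EB : nbhd_in e (base e) x1 = [set x0; x2].
  apply/eqP; rewrite eq_sym eqEcard; apply/andP; split.
    by apply/subsetP => u; rewrite !inE => /orP[] /eqP ->; rewrite ?b0 ?b2 ?e10 ?e12.
  by rewrite -/(deg_in e (base e) x1) d2 cards2 n02.
have [hle hsum hcase] := base_vertex esym HG b1 b0 e10.
have hs := sumdeg HG x1; rewrite hsum EB big_setU1 ?inE //= big_set1 in hs.
rewrite -/(deg_in e (base e) x1) d2 in hcase hs.
split; first by case: hcase => ->; [left|right].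
rewrite cards2 n02 in hs; rewrite -hs; move: hle; rewrite -/(deg_in e (base e) x1) d2 => hle.
lia.
Qed.


Lemma chain v us : v \in base e -> (2 <= size us)%N -> uniq (v :: us) ->
  path e v us -> e (last v us) v -> all (fun x => x \in base e) us ->
  (forall u, u \in us -> deg_in e (base e) u = 2%N) ->
  exists u1 u2 rest, us = [:: u1, u2 & rest] /\
   [/\ (Posz (deg e u1) = 2 \/ Posz (deg e u1) = kk a b),
       (Posz (deg e v) + Posz (deg e u2) + (Posz (deg e u1) - 2) = fv a b (deg e u1))%R,
       (Posz (deg e u2) = 2 \/ Posz (deg e u2) = kk a b),
       (Posz (deg e u1) + Posz (deg e (head v rest)) + (Posz (deg e u2) - 2)
          = fv a b (deg e u2))%R &
       (rest != [::] -> Posz (deg e (head v rest)) = 2 \/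
                        Posz (deg e (head v rest)) = kk a b)].
Proof.
case: us => [|u1 [|u2 rest]] //= vb _ hu hp hl hb hd.
exists u1, u2, rest; split => //.
rewrite /= !inE !negb_or in hu; case/and4P: hu => /and3P[vu1 vu2 vr] /andP[u12 u1r] _ _.
case/andP: hp => vu1e /andP[u12e pr].
case/andP: hb => u1b /andP[u2b rb].
have d1 := hd u1; rewrite inE eqxx /= in d1; have {d1}d1 := d1 erefl.
have d2 := hd u2; rewrite !inE eqxx orbT /= in d2; have {d2}d2 := d2 erefl.
have u1v : e u1 v by rewrite esym.
have [c1 s1] := window vb u1b u2b u1v u12e vu2 d1.
have u21 : e u2 u1 by rewrite esym.
have [h3b h3e h3n] : [/\ head v rest \in base e, e u2 (head v rest) & u1 != head v rest].
  case: rest vr u1r rb pr hl {hd} => [|u3 r] /=.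
    by move=> _ _ _ _ hl; rewrite vb hl eq_sym vu1.
  rewrite !inE !negb_or => _ /andP[u13 _] /andP[u3b _] /andP[u23 _] _.
  by rewrite u3b u23 u13.
have [c2 s2] := window u1b u2b h3b u21 h3e h3n d2.
split => //.
case: rest vr u1r rb pr hl hd h3b h3e {h3n s2} => [|u3 r] //= _ _ _ _ _ hd h3b h3e _.
have u32 : e u3 u2 by rewrite esym.
have [_ _ hc] := base_vertex esym HG h3b u2b u32.
rewrite -/(deg_in e (base e) u3) hd ?inE ?eqxx ?orbT // in hc.
by case: hc => ->; [left|right].
Qed.

Lemma rev_cyc v us : path e v us -> e (last v us) v ->
  path e v (rev us) /\ e (last v (rev us)) v.
Proof.
move=> hp hl.
have c0 : cycle e (v :: us) by rewrite /= rcons_path hp hl.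
have c1 : cycle e (rev (v :: us)).
  have E : (fun z => e^~ z) =2 e by move=> x y /=; rewrite esym.
  by rewrite rev_cycle (eq_cycle E).
rewrite rev_cons -(rotr_cycle 1) rotr1_rcons /= rcons_path in c1.
by case/andP: c1 => -> ->.
Qed.

Lemma head_rev (v : T) us : head v (rev us) = last v us.
Proof. by case/lastP: us => [|s x] //; rewrite rev_rcons last_rcons. Qed.

Lemma last_rev (v : T) us : last v (rev us) = head v us.
Proof. by case: us => [|x s] //; rewrite rev_cons last_rcons. Qed.

Lemma vertex4 v h l w1 w2 : v \in base e -> uniq [:: h; l; w1; w2] ->
  nbhd_in e (base e) v = [set h; l; w1; w2] ->
  [/\ Posz (deg e v) = 4 \/ Posz (deg e v) = kk a b, (4 <= deg e v)%N,
      (Posz (deg e h) + Posz (deg e l) + (Posz (deg e w1) + Posz (deg e w2))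
        + (Posz (deg e v) - 4) = fv a b (deg e v))%R,
      (2 <= deg e w1)%N & (2 <= deg e w2)%N].
Proof.
move=> vb hu hN.
have hin : forall x, x \in [set h; l; w1; w2] -> x \in base e /\ e v x.
  by move=> x; rewrite -hN !inE => /andP[].
have [hb hv] : h \in base e /\ e v h by apply: hin; rewrite !inE eqxx.
have [w1b w1v] : w1 \in base e /\ e v w1 by apply: hin; rewrite !inE eqxx !orbT.
have [w2b w2v] : w2 \in base e /\ e v w2 by apply: hin; rewrite !inE eqxx !orbT.
have [hle hsum hcase] := base_vertex esym HG vb hb hv.
have ES : [set h; l; w1; w2] = [set x in [:: h; l; w1; w2]].
  by apply/setP => x; rewrite !inE !orbA.
have c4 : #|nbhd_in e (base e) v| = 4%N.
  by rewrite hN ES cardsE; apply/card_uniqP.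
have SS : (\sum_(u in nbhd_in e (base e) v) deg e u
           = deg e h + deg e l + (deg e w1 + deg e w2))%N.
  rewrite hN ES (eq_bigl (fun x => x \in [:: h; l; w1; w2])); last by move=> x; rewrite inE.
  rewrite -big_uniq // !big_cons big_nil. by rewrite /= addn0 !addnA.
rewrite c4 SS in hsum; rewrite c4 in hle hcase.
have hs := sumdeg HG v; rewrite hsum in hs.
have g1 := deg2_base w1b vb (etrans (esym _ _) w1v).
have g2 := deg2_base w2b vb (etrans (esym _ _) w2v).
split => //.
- by case: hcase => ->; [left|right].
- by rewrite -hs; lia.
Qed.
End Glob.

Unset Implicit Arguments.
Local Open Scope ring_scope.

Lemma arith_short (f : int -> int) (k b X D d1 d2 w1 w2 : int) :
  3 <= k -> f 2 = 2*k - 2 - b -> f 4 = 4*k - 12 - 3*b -> f k = k - X ->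
  (b = -1 /\ X = 1 - k) \/ (b = -2 /\ X = 2 - 2*k) \/ (b <= -3 /\ X <= 3 - 3*k) ->
  (D = 4 \/ D = k) -> 4 <= D ->
  (d1 = 2 \/ d1 = k) -> (d2 = 2 \/ d2 = k) -> 2 <= w1 -> 2 <= w2 ->
  d1 + d2 + (w1 + w2) + (D - 4) = f D ->
  D + d2 + (d1 - 2) = f d1 ->
  D + d1 + (d2 - 2) = f d2 ->
  [/\ D = 4, k = 5, b = -1, w1 = 2 /\ w2 = 2 &
     (d1 = 2 /\ d2 = 5) \/ (d1 = 5 /\ d2 = 2)].
Proof.
move=> hk f2 f4 fk hX hD hD4 hd1 hd2 hw1 hw2 Sv S1 S2.
case: hD hD4 Sv S1 S2 => ->; case: hd1 => ->; case: hd2 => ->;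
  rewrite ?f2 ?f4 ?fk => hD4 Sv S1 S2; split; lia.
Qed.

Lemma arith_long (f : int -> int) (k b X D d1 d2 d3 e1 e2 e3 w1 w2 : int) :
  3 <= k -> f 2 = 2*k - 2 - b -> f 4 = 4*k - 12 - 3*b -> f k = k - X ->
  (b = -1 /\ X = 1 - k) \/ (b = -2 /\ X = 2 - 2*k) \/ (b <= -3 /\ X <= 3 - 3*k) ->
  (D = 4 \/ D = k) -> 4 <= D ->
  (d1 = 2 \/ d1 = k) -> (d2 = 2 \/ d2 = k) -> (d3 = 2 \/ d3 = k) ->
  (e1 = 2 \/ e1 = k) -> (e2 = 2 \/ e2 = k) -> (e3 = 2 \/ e3 = k) ->
  2 <= w1 -> 2 <= w2 ->
  d1 + e1 + (w1 + w2) + (D - 4) = f D ->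
  D + d2 + (d1 - 2) = f d1 ->
  d1 + d3 + (d2 - 2) = f d2 ->
  D + e2 + (e1 - 2) = f e1 ->
  e1 + e3 + (e2 - 2) = f e2 -> False.
Proof.
move=> hk f2 f4 fk hX hD hD4 hd1 hd2 hd3 he1 he2 he3 hw1 hw2 Sv S1 S2 R1 R2.
case: hD hD4 Sv S1 R1 => -> hD4 Sv S1 R1;
 case: hd1 S1 S2 Sv => -> S1 S2 Sv; case: hd2 S1 S2 => -> S1 S2;
 rewrite ?f2 ?f4 ?fk in S1 S2 Sv R1 hD4 *; try lia;
 case: hd3 S2 => -> S2; rewrite ?f2 ?f4 ?fk in S2; try lia;
 case: he1 R1 R2 Sv => -> R1 R2 Sv; case: he2 R1 R2 => -> R1 R2;
 rewrite ?f2 ?f4 ?fk in R1 R2 Sv; try lia;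
 case: he3 R2 => -> R2; rewrite ?f2 ?f4 ?fk in R2; lia.
Qed.

Lemma hX_lemma (k b : int) : 3 <= k -> b <= -1 ->
  (b = -1 /\ b * (k - 1) = 1 - k) \/ (b = -2 /\ b * (k - 1) = 2 - 2 * k) \/
          (b <= -3 /\ b * (k - 1) <= 3 - 3 * k).
Proof.
move=> hk hb.
have : b = -1 \/ b = -2 \/ b <= -3 by lia.
case=> [->|[->|h3]].
- by left; split => //; ring.
- by right; left; split => //; ring.
right; right; split => //.
have E : b * (k - 1) = (b + 3) * (k - 1) - 3 * (k - 1) by ring.
have : (b + 3) * (k - 1) <= 0 by apply: mulr_le0_ge0; lia.
rewrite E; lia.
Qed.

Theorem lemma3p2 (T : finType) (e : rel T) (a b : int)
  (Hsimple : simple_graph e) (Hconn : connected_graph e)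
  (Htri : tricyclic e) (HG : in_Gab e a b)
  (Hpend : exists x : T, pendant e x)
  (v : T) (us : seq T) (w1 w2 : T)
  (Hcyc : internal_cycle e v us)
  (Hdist : uniq [:: head v us; last v us; w1; w2])
  (HN : nbhd_in e (base e) v = [set head v us; last v us; w1; w2]) :
  [/\ deg e v = 4%N /\ (size us).+1 = 3%N,
      in_Gab e 7 (-1),
      deg e w1 = 2%N /\ deg e w2 = 2%N,
      a + b - 1 = 5 &
      (deg e (head v us) = 2%N /\ deg e (last v us) = 5%N) \/
      (deg e (head v us) = 5%N /\ deg e (last v us) = 2%N)].
Proof.
case: Hsimple => esym irr.
case: Hcyc => [[hsz hu] [hp hl] hall hd3 hdus].
case/andP: hall => vb hallus.
have [x hx] := Hpend.
have vbd : (0 < deg_in e (base e) v)%N by apply: leq_trans hd3.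
have xnb : x \notin base e.
  have T1 : (1 <= #|T|)%N by apply/card_gt0P; exists v.
  apply/negP => xb; move: (leaf_not_S1 hx); rewrite base_Sj in xb.
  by rewrite (subsetP (Sj_mono e T1) _ xb).
have [p hpx Ex] := connectP (Hconn v x).
have [y' [z [y'b y'd y'z znb]]] : exists y' z, [/\ y' \in base e,
    (0 < deg_in e (base e) y')%N, e y' z & z \notin base e].
  by apply: (path_exit esym vb vbd hpx); rewrite -Ex.
have [hk hb] := global_bk esym HG y'b y'd y'z znb.
have [hD hD4 Sv g1 g2] := vertex4 esym HG vb Hdist HN.
have [u1 [u2 [rest [Eus [c1 s1 c2 s2 c3]]]]] := chain esym HG vb hsz hu hp hl hallus hdus.
set k := kk a b in hk hD c1 c2 c3.
have f2 : fv a b 2 = 2 * k - 2 - b by rewrite /fv /k /kk; ring.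
have f4 : fv a b 4 = 4 * k - 12 - 3 * b by rewrite /fv /k /kk; ring.
have fk : fv a b k = k - b * (k - 1) by rewrite /fv /k /kk; ring.
have hX := @hX_lemma k b hk hb.
have hD4' : 4 <= Posz (deg e v) by rewrite lez_nat.
have g1' : 2 <= Posz (deg e w1) by rewrite lez_nat.
have g2' : 2 <= Posz (deg e w2) by rewrite lez_nat.
case: rest Eus s2 c3 => [|u3 r] Eus s2 c3.
  subst us; rewrite /= in Sv s2 *.
  have s2' : Posz (deg e v) + Posz (deg e u1) + (Posz (deg e u2) - 2) = fv a b (deg e u2).
    by rewrite -s2; ring.
  have [hv4 h5 hb1 [hw1 hw2] hdd] :=
    @arith_short (fv a b) _ _ _ _ _ _ _ _ hk f2 f4 fk hX hD hD4' c1 c2 g1' g2' Sv s1 s2'.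
  have ha : a = 7.
    move: h5 hb1; rewrite /k /kk; clear; lia.
  split.
  - by case: hv4 => ->.
  - by move: HG; rewrite ha hb1.
  - by case: hw1 => ->; case: hw2 => ->.
  - by move: h5; rewrite /k /kk.
  - by case: hdd => [[[h1] [h2]]|[[h1] [h2]]]; [left|right]; split.
exfalso.
have [hp' hl'] := rev_cyc esym hp hl.
have hsz' : (2 <= size (rev us))%N by rewrite size_rev.
have hu' : uniq (v :: rev us) by move: hu; rewrite /= mem_rev rev_uniq.
have hallus' : all (fun x => x \in base e) (rev us) by rewrite all_rev.
have hdus' : forall u, u \in rev us -> deg_in e (base e) u = 2%N.
  by move=> u; rewrite mem_rev; apply: hdus.
have [y1 [y2 [rest' [Erev [cr1 sr1 cr2 sr2 cr3]]]]] :=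
  chain esym HG vb hsz' hu' hp' hl' hallus' hdus'.
have hly : last v us = y1 by rewrite -head_rev Erev.
have nr : rest' != [::].
  apply/negP => /eqP E0; move: (congr1 size Erev); rewrite size_rev Eus E0 /=.
  by [].
rewrite hly Eus /= in Sv.
exact: (@arith_long (fv a b) _ _ _ _ _ _ _ _ _ _ _ _ hk f2 f4 fk hX hD hD4' c1 c2 (c3 isT) cr1 cr2 (cr3 nr)
          g1' g2' Sv s1 s2 sr1 sr2).
Qed.
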